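(* Let $S\subset\{0,1\}^N$ with $|S|=K$ and let $1\le m\le K$ be an integer. Then $$\left\|(\ket{\psi_S}\bra{\psi_S})^{\otimes m}-\ket{\psi^{(m)}_{S,{\rm uni}}}\bra{\psi^{(m)}_{S,{\rm uni}}}\right\|_{\rm tr}\le O\!\left(\frac{m}{\sqrt K}\right),$$ i.e. the left side is at most $Cm/\sqrt K$ for a constant $C$ independent of $N,K,m,S$.
   Context: Work on $N$ qubits with computational basis $\{\ket{\mathbf z}:\mathbf z\in\{0,1\}^N\}$. The subset state is $\ket{\psi_S}=|S|^{-1/2}\sum_{\mathbf z\in S}\ket{\mathbf z}$. For a set $S'$ of $m$ distinct basis bitstrings, the unique-type state is $\ket{S'}=(m!)^{-1/2}\sum \ket{\mathbf z_1}\otimes\cdots\otimes\ket{\mathbf z_m}$, the sum running over all $m!$ orderings $(\mathbf z_1,\dots,\mathbf z_m)$ of the elements of $S'$. The pure unique-type state associated with $S$ is $\ket{\psi^{(m)}_{S,{\rm uni}}}=\binom{K}{m}^{-1/2}\sum_{S'\subset S,\,|S'|=m}\ket{S'}$. $\|A\|_{\rm tr}={\rm Tr}\sqrt{A^\dagger A}$. *)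

(* Defs.v *)
(* complex numbers = an arbitrary numClosedFieldType C
   (e.g. algC or R[i]); spectral decomposition from mathcomp/algebra/spectral.v *)
From HB Require Import structures.
From mathcomp Require Import all_boot all_order all_algebra.
Set Implicit Arguments. Unset Strict Implicit. Unset Printing Implicit Defensive.
Import Order.TTheory GRing.Theory Num.Theory.
Local Open Scope ring_scope.

Section QDefs.
Variable C : numClosedFieldType.

Definition bits (N : nat) := {ffun 'I_N -> bool}.
Definition mbits (N m : nat) := {ffun 'I_m -> bits N}.

(* a vector / operator on the Hilbert space spanned by a finite basis T is a
   matrix indexed by 'I_#|T|, the basis being enumerated by enum_rank *)
Definition ket (T : finType) (x : T) : 'cV[C]_#|T| :=
  \col_i (i == enum_rank x)%:R.

Definition adj m n (A : 'M[C]_(m, n)) : 'M[C]_(n, m) := map_mx Num.conj A^T.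

Definition proj n (v : 'cV[C]_n) : 'M[C]_n := v *m adj v.

Definition psd_sqrt n (M : 'M[C]_n) : 'M[C]_n :=
  invmx (spectralmx M) *m diag_mx (map_mx sqrtC (spectral_diag M)) *m spectralmx M.

Definition trnorm n (A : 'M[C]_n) : C := \tr (psd_sqrt (adj A *m A)).

Definition tensor_pow N m (A : 'M[C]_#|bits N|) : 'M[C]_#|mbits N m| :=
  \matrix_(i, j) \prod_(k < m)
     A (enum_rank ((enum_val i : mbits N m) k)) (enum_rank ((enum_val j : mbits N m) k)).

Definition psiS N (S : {set bits N}) : 'cV[C]_#|bits N| :=
  (sqrtC (#|S|%:R))^-1 *: \sum_(z in S) ket z.

Definition uniq_state N m (S' : {set bits N}) : 'cV[C]_#|mbits N m| :=
  (sqrtC ((m`!)%:R))^-1 *: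
    \sum_(z : mbits N m | injectiveb z && ([set z k | k : 'I_m] == S')) ket z.

Definition psi_uni N m (S : {set bits N}) : 'cV[C]_#|mbits N m| :=
  (sqrtC ('C(#|S|, m)%:R))^-1 *:
    \sum_(S' : {set bits N} | (S' \subset S) && (#|S'| == m)) uniq_state m S'.

End QDefs.

(* Main.v *)
Require Import Defs.
From HB Require Import structures.
From mathcomp Require Import all_boot all_order all_algebra.
From mathcomp Require Import ring lra zify.
Set Implicit Arguments. Unset Strict Implicit. Unset Printing Implicit Defensive.
Import Order.TTheory GRing.Theory Num.Theory.
Local Open Scope ring_scope.

Section Core.
Variable C : numClosedFieldType.

Lemma adj_mul m n p (A : 'M[C]_(m, n)) (B : 'M[C]_(n, p)) :
  adj (A *m B) = adj B *m adj A.
Proof. by rewrite /adj trmx_mul map_mxM. Qed.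

Lemma adjK m n (A : 'M[C]_(m, n)) : adj (adj A) = A.
Proof. by apply/matrixP => i j; rewrite !mxE conjCK. Qed.

Lemma adjB m n (A B : 'M[C]_(m, n)) : adj (A - B) = adj A - adj B.
Proof. by apply/matrixP => i j; rewrite !mxE rmorphB. Qed.

Lemma adj_scalar n (x : C) : adj (x%:M : 'M_n) = (x^*)%:M.
Proof. by apply/matrixP => i j; rewrite !mxE rmorphMn eq_sym. Qed.

Lemma adj_proj n (v : 'cV[C]_n) : adj (proj v) = proj v.
Proof. by rewrite /proj adj_mul adjK. Qed.

Lemma mx11E (X : 'M[C]_1) : X = (X 0 0)%:M.
Proof. exact: mx11_scalar. Qed.


Lemma tr11 (X : 'M[C]_1) : \tr X = X 0 0.
Proof. by rewrite /mxtrace big_ord1. Qed.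

Lemma core n (a b : 'cV[C]_n) (ha : adj a *m a = 1%:M) (hb : adj b *m b = 1%:M) :
  trnorm (proj a - proj b) =
  2 * sqrtC (1 - (adj a *m b) 0 0 * ((adj a *m b) 0 0)^*).
Proof.
set s := (adj a *m b) 0 0; set t := 1 - s * s^*.
have hab : adj a *m b = s%:M := mx11E _.
have hba : adj b *m a = s^*%:M.
  by rewrite -[X in _ *m X]adjK -adj_mul hab adj_scalar.
set A := proj a - proj b.
have hA : adj A = A by rewrite adjB !adj_proj.
have Aa : A *m a = a - s^* *: b.
  by rewrite mulmxBl /proj -!mulmxA ha hba mulmx1 mul_mx_scalar.
have Ab : A *m b = s *: a - b.
  by rewrite mulmxBl /proj -!mulmxA hb hab mulmx1 mul_mx_scalar.
set M := adj A *m A.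
have Ma : M *m a = t *: a.
  rewrite /M hA -mulmxA Aa mulmxBr -scalemxAr Aa Ab.
  by apply/matrixP => i j; rewrite !mxE /t; ring.
have Mb : M *m b = t *: b.
  rewrite /M hA -mulmxA Ab mulmxBr -scalemxAr Aa Ab.
  by apply/matrixP => i j; rewrite !mxE /t; ring.
have MA : M *m A = t *: A.
  by rewrite /A mulmxBr /proj !mulmxA Ma Mb -!scalemxAl scalerBr.
have MM : M *m M = t *: M.
  by rewrite {2}/M hA mulmxA MA -scalemxAl /M hA.
have trM : \tr M = 2 * t.
  rewrite /M hA {1}/A mulmxBl /proj raddfB /= -!mulmxA !(mxtrace_mulC a) !(mxtrace_mulC b).
  rewrite -!mulmxA Aa Ab.
  rewrite !tr11 !mulmxBr -!scalemxAr ha hb hab hba !mxE /t eqxx /= !mulr1n; ring.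
have hM : adj M = M by rewrite /M adj_mul adjK.
have nM : M \is normalmx.
  apply/normalmxP; have -> : (M ^t* )%sesqui = M by exact: hM.
  done.
have /orthomx_spectralP eM := nM.
rewrite /trnorm -/A -/M /psd_sqrt.
set U := spectralmx M in eM *; set d := spectral_diag M in eM *.
have Uu : U \in unitmx := spectral_unit M.
clearbody U d M.
have eD : diag_mx d = U *m M *m invmx U.
  by rewrite [in RHS]eM -/U -/d !mulmxA mulmxV // mul1mx mulmxK.
have dd : forall i, d 0 i * d 0 i = t * d 0 i.
  move=> i.
  have : diag_mx d *m diag_mx d = t *: diag_mx d.
    rewrite eD !mulmxA mulmxKV // -[U *m M *m M]mulmxA MM.
    by rewrite -scalemxAr -scalemxAl.
  move/matrixP => /(_ i i); rewrite mulmx_diag !mxE eqxx !mulr1n.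
  done.
have trd : \sum_i d 0 i = 2 * t.
  by rewrite -trM -mxtrace_diag eD mxtrace_mulC mulKmx.
rewrite mxtrace_mulC mulKVmx // mxtrace_diag.
under eq_bigr do rewrite mxE.
have [t0|tn0] := eqVneq t 0.
  rewrite t0 sqrtC0 mulr0 big1 // => i _.
  have := dd i; rewrite t0 mul0r => /eqP; rewrite mulf_eq0 orbb => /eqP ->.
  exact: sqrtC0.
transitivity (\sum_i d 0 i * (sqrtC t / t)).
  apply: eq_bigr => i _.
  have := dd i; move/eqP; rewrite -subr_eq0 -mulrBl mulf_eq0 subr_eq0 => /orP [] /eqP ->.
    by rewrite mulrC mulfVK.
  by rewrite sqrtC0 mul0r.
rewrite -mulr_suml trd. by field.
Qed.

End Core.

Section Ind.
Variable C : numClosedFieldType.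

Definition ind (T : finType) (c : C) (A : {set T}) : 'cV[C]_#|T| :=
  \col_i (c * (enum_val i \in A)%:R).

Lemma sum_enum (T : finType) (F : T -> C) :
  \sum_(i < #|T|) F (enum_val i) = \sum_x F x.
Proof.
symmetry; rewrite (reindex (@enum_val T (pred_of_simpl predT))) //; exact: onW_bij (enum_val_bij T).
Qed.

Lemma sum_indic (T : finType) (A : {set T}) :
  \sum_x ((x \in A)%:R : C) = #|A|%:R.
Proof.
rewrite (bigID (mem A)) /= [X in _ + X]big1 ?addr0; last by move=> x /negbTE ->.
by rewrite (eq_bigr (fun _ => 1)) ?sumr_const // => x ->.
Qed.

Lemma dot_ind (T : finType) (c c' : C) (A B : {set T}) :
  (adj (ind c A) *m ind c' B) 0 0 = c^* * c' * #|A :&: B|%:R.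
Proof.
rewrite !mxE.
under eq_bigr do rewrite !mxE.
rewrite (sum_enum (fun x => (c * (x \in A)%:R)^* * (c' * (x \in B)%:R))).
rewrite -sum_indic mulr_sumr; apply: eq_bigr => x _.
rewrite inE rmorphM /= conjC_nat; case: (x \in A); case: (x \in B) => /=; ring.
Qed.

Lemma pure_ind (T : finType) (A B : {set T}) (a b : C) :
  B \subset A -> a^* * a * #|A|%:R = 1 -> b^* * b * #|B|%:R = 1 ->
  trnorm (proj (ind a A) - proj (ind b B)) =
  2 * sqrtC (1 - #|B|%:R / #|A|%:R).
Proof.
move=> BA ha hb.
have hA0 : (#|A|%:R : C) != 0.
  by apply/eqP => h; move: ha; rewrite h mulr0 => /eqP; rewrite eq_sym oner_eq0.
rewrite core; first last.
- by rewrite [LHS]mx11E dot_ind setIid hb.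
- by rewrite [LHS]mx11E dot_ind setIid ha.
rewrite dot_ind (setIidPr BA); congr (_ * sqrtC (1 - _)).
rewrite !rmorphM /= conjCK conjC_nat.
have -> : a^* * b * #|B|%:R * (a * b^* * #|B|%:R) = (a^* * a * #|A|%:R) * (b^* * b * #|B|%:R) * #|B|%:R / #|A|%:R.
  by field.
by rewrite ha hb !mul1r.
Qed.

End Ind.

Section Bridge.
Variable C : numClosedFieldType.

Lemma sum_eq1 (T : finType) (P : pred T) (y : T) (b : bool) :
  \sum_(x | P x) ((b && (y == x))%:R : C) = (b && P y)%:R.
Proof.
case: b => /=; last by rewrite big1.
case Py: (P y).
  rewrite (bigD1 y) //= eqxx big1 ?addr0 // => x /andP [_ ne].
  by rewrite eq_sym (negbTE ne).
by rewrite big1 // => x Px; case: eqP => // e; move: Py; rewrite e Px.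
Qed.

Lemma sum_ket (T : finType) (P : pred T) i :
  (\sum_(z | P z) ket C z) i 0 = (P (enum_val i))%:R.
Proof.
rewrite summxE.
under eq_bigr do rewrite mxE.
rewrite (eq_bigr (fun z => ((true && (enum_val i == z))%:R : C))) ?sum_eq1 // => z _.
congr (_%:R) => /=.
by rewrite -(inj_eq enum_val_inj) enum_rankK.
Qed.

Lemma projE n (v : 'cV[C]_n) i j : proj v i j = v i 0 * (v j 0)^*.
Proof. by rewrite /proj !mxE big_ord1 !mxE. Qed.

Lemma prod_ind (I : finType) (c : C) (p : pred I) :
  \prod_k (c * (p k)%:R) = c ^+ #|I| * [forall k, p k]%:R.
Proof.
rewrite big_split /= prodr_const; congr (_ * _).
case: (boolP [forall k, p k]) => [/forallP h | /forallPn [k hk]].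
  by rewrite big1 // => k _; rewrite h.
by rewrite (bigD1 k) //= (negbTE hk) mul0r.
Qed.

Variables (N : nat) (S : {set bits N}) (m : nat).

Definition AS : {set mbits N m} := [set z in ffun_on (mem S)].
Definition BS : {set mbits N m} := [set z in ffun_on (mem S) | injectiveb z].

Lemma psiS_entry i : psiS C S i 0 = (sqrtC (#|S|%:R))^-1 * (enum_val i \in S)%:R.
Proof. by rewrite /psiS mxE sum_ket. Qed.

Lemma bridge1 :
  tensor_pow m (proj (psiS C S)) = proj (ind ((sqrtC (#|S|%:R))^-1 ^+ m) AS).
Proof.
apply/matrixP => i j; rewrite /tensor_pow mxE projE !mxE.
under eq_bigr do rewrite projE !psiS_entry !enum_rankK.
rewrite big_split /= -rmorph_prod /= !prod_ind card_ord rmorphM /=.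
have memA z : (z \in AS) = [forall k, z k \in S].
  by rewrite inE; apply/ffun_onP/forallP.
by rewrite !memA [in RHS]rmorphM.
Qed.

Lemma bridge2 :
  psi_uni C m S = ind ((sqrtC ('C(#|S|, m)%:R))^-1 * (sqrtC (m`!%:R))^-1) BS.
Proof.
apply/matrixP => i j; rewrite (ord1 j) /psi_uni !mxE summxE.
under eq_bigr do rewrite /uniq_state mxE sum_ket.
rewrite -mulr_sumr sum_eq1 mulrA; congr (_ * _%:R).
set z := enum_val i.
rewrite inE andbC; case: (boolP (injectiveb z)) => /= [/injectiveP zi|_]; last by rewrite !andbF.
rewrite card_imset // card_ord eqxx !andbT.
congr (nat_of_bool _).
apply/idP/idP => [/subsetP h | /ffun_onP h].
  by apply/ffun_onP => k; apply: h; apply: imset_f.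
by apply/subsetP => _ /imsetP [k _ ->]; apply: h.
Qed.

End Bridge.

Lemma ffact_le_exp (K m : nat) : (K ^_ m <= K ^ m)%N.
Proof.
elim: m => [|m IH]; first by rewrite ffactn0 expn0.
by rewrite ffactnSr expnS mulnC leq_mul // leq_subr.
Qed.

Lemma nat_ineq (K m : nat) : (K ^ m * K <= K ^_ m * K + m * m * K ^ m)%N.
Proof.
elim: m => [|m IH]; first by rewrite ffactn0 expn0 leq_addr.
rewrite ffactnSr expnS.
have hF := ffact_le_exp K m.
move: IH hF; set P := (K ^ m)%N; set F := (K ^_ m)%N => IH hF.
case: (leqP m K) => hmK.
  have -> : K = (K - m + m)%N by rewrite subnK.
  move: IH; have -> : K = (K - m + m)%N by rewrite subnK.
  set u := (K - m)%N; rewrite addnK => IH.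
  nia.
have -> : (K - m)%N = 0%N by apply/eqP; rewrite subn_eq0 ltnW.
nia.
Qed.

Lemma final_ineq (C : numClosedFieldType) (K m F P : nat) :
  (0 < K)%N -> (0 < P)%N -> (F <= P)%N -> (P * K <= F * K + m * m * P)%N ->
  2 * sqrtC (1 - (F%:R : C) / P%:R) <= 2%:R * m%:R / sqrtC K%:R.
Proof.
move=> K0 P0 FP ineq.
have sK : 0 < sqrtC (K%:R : C) by rewrite sqrtC_gt0 ltr0n.
have P0' : (P%:R : C) != 0 by rewrite pnatr_eq0 -lt0n.
have t_eq : 1 - (F%:R : C) / P%:R = (P - F)%:R / P%:R.
  by rewrite natrB // mulrBl mulfV.
have tK : (m%:R : C) ^+ 2 - (1 - F%:R / P%:R) * K%:R
          = (F * K + m * m * P - P * K)%:R / P%:R.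
  rewrite natrB // !natrD !natrM; field; exact: P0'.
rewrite -mulrA ler_pM2l ?ltr0n // ler_pdivlMr //.
have t0 : 0 <= 1 - (F%:R : C) / P%:R by rewrite t_eq divr_ge0 ?ler0n.
rewrite -sqrtCM ?qualifE ?ler0n //.
rewrite -[X in _ <= X](@sqrCK _ (m%:R)) ?ler0n //.
rewrite ler_sqrtC ?qualifE ?mulr_ge0 ?ler0n ?exprn_ge0 //.
rewrite -subr_ge0 tK divr_ge0 ?ler0n //.
  exact: (mulr_ge0 t0 (ler0n _ _)).
exact: (exprn_ge0 _ (ler0n _ _)).
exact: ler0n.
Qed.
Unset Implicit Arguments. Set Strict Implicit. Set Printing Implicit Defensive.

Theorem lemma1 :
  exists c : nat, forall (C : numClosedFieldType) (N : nat) (S : {set bits N}) (m : nat),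
    (1 <= m <= #|S|)%N ->
    trnorm (tensor_pow m (proj (psiS C S)) - proj (psi_uni C m S))
      <= (c%:R : C) * m%:R / sqrtC (#|S|%:R).
Proof.
exists 2%N => C N S m /andP [m1 mK].
have K0 : (0 < #|S|)%N by apply: leq_trans mK.
have cA : #|AS S m| = (#|S| ^ m)%N.
  by rewrite /AS cardsE card_ffun_on card_ord.
have cB : #|BS S m| = (#|S| ^_ m)%N.
  by rewrite /BS card_inj_ffuns_on card_ord.
rewrite bridge1 bridge2 pure_ind.
- rewrite cA cB; apply: final_ineq => //.
  + by rewrite expn_gt0 K0.
  + exact: ffact_le_exp.
  + exact: nat_ineq.
- by apply/subsetP => z; rewrite !inE => /andP [].
- set x := (sqrtC (#|S|%:R : C))^-1.
  have x0 : 0 <= x by rewrite invr_ge0 sqrtC_ge0 ler0n.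
  rewrite geC0_conj ?exprn_ge0 // cA natrX -!exprMn.
  have -> : x * x * #|S|%:R = 1.
    rewrite /x -invfM -expr2 sqrtCK mulVf // pnatr_eq0 -lt0n //.
  by rewrite expr1n.
- set y := (sqrtC ('C(#|S|, m)%:R : C))^-1 * (sqrtC (m`!%:R))^-1.
  have y0 : 0 <= y by rewrite mulr_ge0 // invr_ge0 sqrtC_ge0 ler0n.
  rewrite geC0_conj // cB -bin_ffact natrM /y.
  have h1 : ('C(#|S|, m)%:R : C) != 0 by rewrite pnatr_eq0 -lt0n bin_gt0.
  have h2 : (m`!%:R : C) != 0 by rewrite pnatr_eq0 -lt0n fact_gt0.
  rewrite -[X in _ = X](mulfV (mulf_neq0 h1 h2)).
  rewrite -{3}(sqrtCK ('C(#|S|, m)%:R : C)) -{3}(sqrtCK (m`!%:R : C)).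
  field.
  by rewrite !sqrtC_eq0 h1 h2.
Qed.
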